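(* Let $Q$ be a right Leibniz algebra over a field $\mathbb{F}$ and let $L$ be a subalgebra of $Q$. Then $Q$ is an algebra of quotients of $L$ if and only if $Q$ is ideally absorbed into $L$.
   Context: A right Leibniz algebra is a vector space with a bilinear bracket satisfying $[x,[y,z]]=[[x,y],z]-[[x,z],y]$ for all $x,y,z$. An ideal $I$ of $L$ is a subspace with $[I,L]\subseteq I$ and $[L,I]\subseteq I$. For $H\subseteq L$, $\mathrm{Ann}_L(H)=\{x\in L: [x,y]=[y,x]=0\ \forall y\in H\}$. For $x\in L$ let $R_x,L_x$ be the operators on $Q$ given by $R_x(u)=[u,x]$, $L_x(u)=[x,u]$, and let $\mathscr{A}(L)$ be the associative algebra (under composition) generated by $\{R_x,L_y: x,y\in L\}$. For $q\in Q$ put ${}_L(q)=\mathbb{F}q+\{\sum_{i=1}^n\xi_i(q): \xi_i\in\mathscr{A}(L), n\in\mathbb{N}\}$ and $(L:q)=\{x\in L: [x,{}_L(q)]\subseteq L,\ [{}_L(q),x]\subseteq L\}$. $Q$ is an algebra of quotients of $L$ if for all $p,q\in Q$ with $p\neq 0$ there exists $x\in(L:q)$ with $[x,p]\neq 0$, or there exists $y\in (L:q)$ with $[p,y]\neq0$. $Q$ is ideally absorbed into $L$ if for each $0\neq q\in Q$ there exists an ideal $I$ of $L$ with $\mathrm{Ann}_L(I)=\{0\}$ such that $[I,q]\neq\{0\}$ or $[q,I]\neq\{0\}$, and both $[I,q]\subseteq L$ and $[q,I]\subseteq L$. *)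

(* Defs.v *)
From mathcomp Require Import all_boot all_order all_algebra.
Set Implicit Arguments. Unset Strict Implicit. Unset Printing Implicit Defensive.
Import GRing.Theory.
Local Open Scope ring_scope.

Section LeibnizDefs.
Variables (F : fieldType) (V : lmodType F) (br : V -> V -> V).

Definition right_leibniz_algebra : Prop :=
  (forall (a : F) (x y z : V), br (a *: x + y) z = a *: br x z + br y z) /\
  (forall (a : F) (x y z : V), br z (a *: x + y) = a *: br z x + br z y) /\
  (forall x y z : V, br x (br y z) = br (br x y) z - br (br x z) y).

Definition subspace (S : V -> Prop) : Prop :=
  S 0 /\ forall (a : F) (x y : V), S x -> S y -> S (a *: x + y).

Definition subalgebra (L : V -> Prop) : Prop :=
  subspace L /\ forall x y, L x -> L y -> L (br x y).

(* The associative algebra A(L) (under composition) generated by the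
   operators R_x = (u |-> [u,x]) and L_y = (u |-> [y,u]), x, y in L. *)
Inductive in_AL (L : V -> Prop) : (V -> V) -> Prop :=
| AL_R x : L x -> in_AL L (fun u => br u x)
| AL_L y : L y -> in_AL L (fun u => br y u)
| AL_comp f g : in_AL L f -> in_AL L g -> in_AL L (fun u => f (g u))
| AL_add f g : in_AL L f -> in_AL L g -> in_AL L (fun u => f u + g u)
| AL_scale (a : F) f : in_AL L f -> in_AL L (fun u => a *: f u).

Definition gen_L (L : V -> Prop) (q : V) : V -> Prop :=
  fun v => exists (a : F) (n : nat) (xi : 'I_n -> V -> V),
    (forall i, in_AL L (xi i)) /\ v = a *: q + \sum_(i < n) xi i q.

Definition colon (L : V -> Prop) (q : V) : V -> Prop :=
  fun x => L x /\ forall v, gen_L L q v -> L (br x v) /\ L (br v x).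

Definition algebra_of_quotients (L : V -> Prop) : Prop :=
  forall p q : V, p <> 0 ->
    (exists x, colon L q x /\ br x p <> 0) \/
    (exists y, colon L q y /\ br p y <> 0).

Definition ideal_of (L I : V -> Prop) : Prop :=
  subspace I /\ (forall x, I x -> L x) /\
  (forall x y, I x -> L y -> I (br x y)) /\
  (forall x y, I x -> L y -> I (br y x)).

Definition Ann (L H : V -> Prop) : V -> Prop :=
  fun x => L x /\ forall y, H y -> br x y = 0 /\ br y x = 0.

Definition ideally_absorbed (L : V -> Prop) : Prop :=
  forall q : V, q <> 0 ->
    exists I : V -> Prop,
      ideal_of L I /\
      (forall x, Ann L I x <-> x = 0) /\
      ((exists x, I x /\ br x q <> 0) \/ (exists x, I x /\ br q x <> 0)) /\
      (forall x, I x -> L (br x q) /\ L (br q x)).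

End LeibnizDefs.

(* Main.v *)
Require Import Defs.
From mathcomp Require Import all_boot all_order all_algebra.
From Stdlib Require Import Classical.
Set Implicit Arguments. Unset Strict Implicit. Unset Printing Implicit Defensive.
Import GRing.Theory.
Local Open Scope ring_scope.

Section Aux.
Variables (F : fieldType) (V : lmodType F) (br : V -> V -> V) (L : V -> Prop).
Hypothesis HB : right_leibniz_algebra br.
Hypothesis HL : subalgebra br L.

Lemma brDl x y z : br (x + y) z = br x z + br y z.
Proof. by have := HB.1 1 x y z; rewrite !scale1r. Qed.
Lemma brDr x y z : br z (x + y) = br z x + br z y.
Proof. by have := HB.2.1 1 x y z; rewrite !scale1r. Qed.
Lemma br0l z : br 0 z = 0.
Proof. have h : br 0 z + br 0 z = br 0 z + 0 by rewrite -brDl !addr0. exact: addrI h. Qed.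
Lemma br0r z : br z 0 = 0.
Proof. have h : br z 0 + br z 0 = br z 0 + 0 by rewrite -brDr !addr0. exact: addrI h. Qed.
Lemma brZl a x z : br (a *: x) z = a *: br x z.
Proof. by have := HB.1 a x 0 z; rewrite !addr0 br0l addr0. Qed.
Lemma brZr a x z : br z (a *: x) = a *: br z x.
Proof. by have := HB.2.1 a x 0 z; rewrite !addr0 br0r addr0. Qed.
Lemma brBl x y z : br (x - y) z = br x z - br y z.
Proof. by rewrite brDl -scaleN1r brZl scaleN1r. Qed.
Lemma brBr x y z : br z (x - y) = br z x - br z y.
Proof. by rewrite brDr -scaleN1r brZr scaleN1r. Qed.
Lemma jac x y z : br x (br y z) = br (br x y) z - br (br x z) y.
Proof. exact: HB.2.2. Qed.
Lemma jacR x y z : br (br x y) z = br x (br y z) + br (br x z) y.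
Proof. by rewrite jac subrK. Qed.

Lemma L0 : L 0. Proof. exact: HL.1.1. Qed.
Lemma LZD a x y : L x -> L y -> L (a *: x + y). Proof. exact: HL.1.2. Qed.
Lemma LD x y : L x -> L y -> L (x + y).
Proof. by move=> hx hy; have := LZD 1 hx hy; rewrite scale1r. Qed.
Lemma LZ a x : L x -> L (a *: x).
Proof. by move=> hx; have := LZD a hx L0; rewrite addr0. Qed.
Lemma LB x y : L x -> L y -> L (x - y).
Proof. by move=> hx hy; apply: LD hx _; rewrite -scaleN1r; apply: LZ. Qed.
Lemma Lbr x y : L x -> L y -> L (br x y). Proof. exact: HL.2. Qed.

Section P.
Variable S : V -> Prop.
Hypothesis SL : forall y, S y -> L y.
Hypothesis Sr : forall y a, S y -> L a -> S (br y a).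
Hypothesis Sl : forall y a, S y -> L a -> S (br a y).
Definition P v := forall y, S y -> L (br y v) /\ L (br v y).

Lemma P_lin a x w : P x -> P w -> P (a *: x + w).
Proof.
move=> hx hw y Sy; have [h1 h2] := hx y Sy; have [h3 h4] := hw y Sy.
by rewrite brDr brZr brDl brZl; split; apply: LZD.
Qed.
Lemma P0 : P 0. Proof. by move=> y _; rewrite br0l br0r; split; apply: L0. Qed.
Lemma P_add x w : P x -> P w -> P (x + w).
Proof. by move=> hx hw; have := P_lin 1 hx hw; rewrite scale1r. Qed.

Lemma P_AL f : in_AL br L f -> forall v, P v -> P (f v).
Proof.
elim=> {f}.
- move=> x Lx v Pv y Sy; have [h1 h2] := Pv y Sy.
  split.
  + rewrite jac; apply: LB; first exact: Lbr.
    by have [] := Pv _ (Sr Sy Lx).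
  + rewrite jacR; apply: LD; last exact: Lbr.
    by have [] := Pv _ (Sl Sy Lx).
- move=> x Lx v Pv y Sy; have [h1 h2] := Pv y Sy.
  split.
  + rewrite jac; apply: LB; last exact: Lbr.
    by have [] := Pv _ (Sr Sy Lx).
  + rewrite jacR; apply: LD; first exact: Lbr.
    by have [] := Pv _ (Sl Sy Lx).
- by move=> f g _ hf _ hg v Pv; apply: hf; apply: hg.
- by move=> f g _ hf _ hg v Pv; apply: P_add; [apply: hf|apply: hg].
- by move=> a f _ hf v Pv; have := P_lin a (hf v Pv) P0; rewrite addr0.
Qed.

Lemma S_colon q y : P q -> S y -> colon br L q y.
Proof.
move=> Pq Sy; split; first exact: SL.
move=> v [a [n [xi [hxi ->]]]].
suff : P (a *: q + \sum_(i < n) xi i q) by move/(_ y Sy).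
apply: P_lin => //; apply: (big_ind P P0 P_add) => i _.
exact: P_AL.
Qed.
End P.

Definition G q v := exists a f, in_AL br L f /\ v = a *: q + f q.

Lemma zeroAL : in_AL br L (fun u => 0 *: br u 0).
Proof. apply: AL_scale; apply: AL_R; exact: L0. Qed.

Lemma sumAL n (xi : 'I_n -> V -> V) : (forall i, in_AL br L (xi i)) ->
  exists f, in_AL br L f /\ forall u, \sum_(i < n) xi i u = f u.
Proof.
elim: n xi => [|n IH] xi hxi.
  by exists (fun u => 0 *: br u 0); split; [exact: zeroAL| move=> u; rewrite big_ord0 scale0r].
have [f [hf ef]] := IH (fun i => xi (widen_ord (leqnSn n) i)) (fun i => hxi _).
exists (fun u => f u + xi ord_max u); split; first by apply: AL_add.
by move=> u; rewrite big_ord_recr /= ef.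
Qed.

Lemma gen_G q v : gen_L br L q v <-> G q v.
Proof.
split.
  move=> [a [n [xi [hxi ->]]]]; have [f [hf ef]] := sumAL hxi.
  by exists a, f; rewrite ef.
move=> [a [f [hf ->]]]; exists a, 1%N, (fun _ => f); split => //.
by rewrite big_ord1.
Qed.

Lemma G_l q a v : L a -> G q v -> G q (br a v).
Proof.
move=> La [b [f [hf ->]]]; exists 0, (fun u => b *: br a u + br a (f u)); split.
  apply: AL_add; first by apply: AL_scale; apply: AL_L.
  by apply: (AL_comp (AL_L br La) hf).
by rewrite scale0r add0r brDr brZr.
Qed.

Lemma G_r q a v : L a -> G q v -> G q (br v a).
Proof.
move=> La [b [f [hf ->]]]; exists 0, (fun u => b *: br u a + br (f u) a); split.
  apply: AL_add; first by apply: AL_scale; apply: AL_R.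
  by apply: (AL_comp (AL_R br La) hf).
by rewrite scale0r add0r brDl brZl.
Qed.

Lemma colonE q x : colon br L q x <-> L x /\ forall v, G q v -> L (br x v) /\ L (br v x).
Proof.
split; move=> [Lx h]; split => // v hv; apply: h; exact/gen_G.
Qed.

Lemma colon_ideal q : ideal_of br L (colon br L q).
Proof.
split; [split|split; [|split]].
- apply/colonE; split; first exact: L0.
  by move=> v _; rewrite br0l br0r; split; apply: L0.
- move=> a x y /colonE [Lx hx] /colonE [Ly hy]; apply/colonE; split; first exact: LZD.
  move=> v Gv; have [h1 h2] := hx v Gv; have [h3 h4] := hy v Gv.
  by rewrite brDl brZl brDr brZr; split; apply: LZD.
- by move=> x [].
- move=> x a /colonE [Lx hx] La; apply/colonE; split; first exact: Lbr.
  move=> v Gv; have [h1 h2] := hx v Gv; split.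
  + rewrite jacR; apply: LD; last exact: Lbr.
    by have [] := hx _ (G_l La Gv).
  + rewrite jac; apply: LB; first exact: Lbr.
    by have [] := hx _ (G_r La Gv).
- move=> x a /colonE [Lx hx] La; apply/colonE; split; first exact: Lbr.
  move=> v Gv; have [h1 h2] := hx v Gv; split.
  + rewrite jacR; apply: LD; first exact: Lbr.
    by have [] := hx _ (G_l La Gv).
  + rewrite jac; apply: LB; last exact: Lbr.
    by have [] := hx _ (G_r La Gv).
Qed.

Lemma G_self q : G q q.
Proof.
exists 1, (fun u => 0 *: br u 0); split; first exact: zeroAL.
by rewrite scale0r addr0 scale1r.
Qed.

End Aux.

Theorem theorem3p10 (F : fieldType) (V : lmodType F) (br : V -> V -> V)
  (L : V -> Prop) :
  right_leibniz_algebra br -> subalgebra br L ->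
  (algebra_of_quotients br L <-> ideally_absorbed br L).
Proof.
move=> HB HL; split.
- move=> AQ q hq; exists (colon br L q); split; first exact: colon_ideal.
  split; [|split].
  + move=> x; split.
      move=> [Lx hx]; case: (x =P 0) => // nx.
      have [[y [cy ny]]|[y [cy ny]]] := AQ x q nx.
        by case: (hx y cy) => _ /ny.
      by case: (hx y cy) => /ny.
    move=> ->; split; first exact: L0 HL.
    by move=> y _; rewrite br0l // br0r.
  + exact: (AQ q q hq).
  + move=> x [_ h]; apply: h; apply/(gen_G HL); exact: (G_self HL).
- move=> IA p q hp.
  have [J [[JS [JL [Jr Jl]]] [JAnn [Jp JpL]]]] := IA p hp.
  have [S [[_ [SL [Sr Sl]]] [SAnn Scol]]] :
    exists S, ideal_of br L S /\ (forall x, Ann br L S x <-> x = 0) /\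
      (forall y, S y -> colon br L q y).
    case: (q =P 0) => [->|nq].
      exists J; split; first by split.
      split; first exact: JAnn.
      move=> y Jy; apply: (S_colon HB HL JL Jr Jl) => //.
      by move=> z _; rewrite br0l // br0r //; split; apply: L0 HL.
    have [I [[IS [IL [Ir Il]]] [IAnn [_ Iq]]]] := IA q nq.
    exists I; split; first by split.
    split; first exact: IAnn.
    move=> y Iy; exact: (S_colon HB HL IL Ir Il).
  apply: NNPP => hn.
  have h1 : forall y, S y -> br y p = 0.
    move=> y Sy; case: (br y p =P 0) => // nz; exfalso; apply: hn; left; exists y; split=> //.
    exact: Scol.
  have h2 : forall y, S y -> br p y = 0.
    move=> y Sy; case: (br p y =P 0) => // nz; exfalso; apply: hn; right; exists y; split=> //.
    exact: Scol.
  case: Jp => [[j [Jj nj]]|[j [Jj nj]]]; apply: nj; apply/SAnn.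
  + split; first by have [] := JpL j Jj.
    move=> y Sy; split.
    * by rewrite (jacR HB) (h2 y Sy) (br0r HB) (h1 _ (Sl _ _ Sy (JL _ Jj))) addr0.
    * by rewrite (jac HB) (h1 _ (Sr _ _ Sy (JL _ Jj))) (h1 y Sy) (br0l HB) subr0.
  + split; first by have [] := JpL j Jj.
    move=> y Sy; split.
    * by rewrite (jacR HB) (h2 _ (Sl _ _ Sy (JL _ Jj))) (h2 y Sy) (br0l HB) addr0.
    * by rewrite (jac HB) (h1 y Sy) (br0l HB) (h1 _ (Sr _ _ Sy (JL _ Jj))) subr0.
Qed.
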